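(* Suppose that the limit $c_1:=\lim_{n\to\infty}E_n(F_1(n))/n$ exists and $c_1\in(0,1)$. Then for every sequence of positive numbers $(\lambda_n)_{n\ge1}$ with $\lambda_n/n\to1$, $$\lim_{L\to\infty}\limsup_{n\to\infty}\frac1n\sum_{k\in M_n^{Lc}}\big(\lambda_n p_{kn}+(\lambda_n p_{kn})^2\big)e^{-\lambda_n p_{kn}}=0,$$ where $M_n^{Lc}=\{k\ge1: np_{kn}>L\}$. In particular, for every such sequence $(\lambda_n)$ and every $\varepsilon>0$, $$\lim_{n\to\infty}\frac{1}{s_n^2}\sum_{k=1}^\infty(\lambda_n p_{kn})^2e^{-\lambda_n p_{kn}}\,I_{\{\lambda_n p_{kn}>\varepsilon s_n^2/a(s_n^2)\}}=0.$$
   Context: For each $n\ge1$, $P_n$ is a probability measure (expectation $E_n$) and $p_n=(p_{kn})_{k\ge1}$ is a probability vector. Under $P_n$ a sample of size $n$ is drawn i.i.d. from countably many species, species $k$ with probability $p_{kn}$; $X_k(n)$ is the number of times species $k$ appears, and $F_1(n)=\#\{k: X_k(n)=1\}$. For $\lambda>0$, $s_{\lambda n}^2=\sum_{k\ge1}\big(\lambda p_{kn}+(\lambda p_{kn})^2\big)e^{-\lambda p_{kn}}$ and $s_n^2=s_{nn}^2$. The function $a:[0,\infty)\to[1,\infty)$ satisfies $a(t)/\sqrt t\to\infty$ and $a(t)/t\to0$ as $t\to\infty$. *)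

(* Defs.v *)
From HB Require Import structures.
From mathcomp Require Import all_boot all_order all_algebra.
From mathcomp Require Import all_classical all_reals all_analysis.
Set Implicit Arguments. Unset Strict Implicit. Unset Printing Implicit Defensive.
Import Order.TTheory GRing.Theory Num.Theory.
Local Open Scope ring_scope.
Local Open Scope classical_set_scope.

(* p n k = p_{kn}: probability of species k (species indexed by k : nat,
   i.e. species "k+1" of the paper) in the n-th model. *)

Definition F1 (s : seq nat) : nat :=
  count (fun k => count_mem k s == 1)%N (undup s).

(* E_n(F_1(n)): expectation of F_1 under P_n, where the sample of size n is
   drawn i.i.d. from p n; the law of the ordered sample s : n.-tuple nat is
   P_n(s) = prod_i p_{s_i, n}. *)
Definition EF1 {R : realType} (p : nat -> nat -> R) (n : nat) : \bar R :=
  \esum_(s in [set: n.-tuple nat]) ((\prod_(x <- s) p n x) * (F1 s)%:R)%:E.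

Definition phi {R : realType} (x : R) : R := (x + x ^+ 2) * expR (- x).

Definition s2 {R : realType} (p : nat -> nat -> R) (lam : R) (n : nat) : \bar R :=
  \esum_(k in [set: nat]) (phi (lam * p n k))%:E.

Definition sn2 {R : realType} (p : nat -> nat -> R) (n : nat) : \bar R :=
  s2 p n%:R n.

(* Main.v *)
Require Import Defs.
From HB Require Import structures.
From mathcomp Require Import all_boot all_order all_algebra.
From mathcomp Require Import all_classical all_reals all_analysis.
From mathcomp Require Import ring lra.
Import Order.TTheory GRing.Theory Num.Theory.
Local Open Scope ring_scope.
Local Open Scope classical_set_scope.



Section Aux.
Variable R : realType.

Lemma expR_sq_bound (x : R) : 0 <= x -> x + x ^+ 2 <= 4 * expR x.
Proof.
move=> x0.
have h1 := expR_ge1Dx x.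
have h2 := @expR_ge1Dxn R x 1%N x0.
rewrite /= in h2.
have : 1 + x ^+ 2 / 2 <= expR x by move: h2; rewrite (_ : (2`!)%:R = 2 :> R) // .
nra.
Qed.

Lemma phi_ge0 (x : R) : 0 <= x -> 0 <= phi x.
Proof. by move=> x0; rewrite /phi mulr_ge0 // ?expR_ge0 // addr_ge0 // sqr_ge0. Qed.

Lemma phi_le4 (x : R) : 0 <= x -> phi x <= 4.
Proof.
move=> x0; rewrite /phi expRN ler_pdivrMr ?expR_gt0 //.
exact: expR_sq_bound.
Qed.

Lemma sq_le4 (x : R) : 0 <= x -> x ^+ 2 * expR (- x) <= 4.
Proof.
move=> x0; apply: (le_trans _ (@phi_le4 x x0)); rewrite /phi ler_wpM2r ?expR_ge0 //.
by rewrite lerDr.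
Qed.

Lemma sq_ge0 (x : R) : 0 <= x ^+ 2 * expR (- x).
Proof. by rewrite mulr_ge0 ?expR_ge0 ?sqr_ge0. Qed.

Lemma phi_lex (x : R) : 0 <= x -> phi x <= x.
Proof.
move=> x0; rewrite /phi expRN ler_pdivrMr ?expR_gt0 //.
have := expR_ge1Dx x; nra.
Qed.

Lemma phi_lower (x : R) : 0 <= x -> x * expR (- x) <= phi x.
Proof. by move=> x0; rewrite /phi ler_wpM2r ?expR_ge0 // lerDl sqr_ge0. Qed.

End Aux.


Section Esum.
Variable R : realType.
Local Open Scope ereal_scope.

Lemma esumZl_le (T : choiceType) (I : set T) (a : R) (f : T -> \bar R) :
  (0 <= a)%R -> (forall t, 0 <= f t) ->
  \esum_(i in I) (a%:E * f i) <= a%:E * \esum_(i in I) f i.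
Proof.
move=> a0 f0; apply: ge_ereal_sup => _ [X [finX XI] <-].
rewrite -ge0_mule_fsumr //; apply: lee_wpmul2l; first by rewrite lee_fin.
by apply: ereal_sup_ubound; exists X.
Qed.

Lemma esum_sub_le (T : choiceType) (I : set T) (f : T -> \bar R) :
  (forall t, 0 <= f t) -> \esum_(i in I) f i <= \esum_(i in [set: T]) f i.
Proof.
move=> f0; rewrite [leLHS]esum_mkcond; apply: le_esum => i _.
by case: ifP => // _; exact: f0.
Qed.

Lemma esum_markov (q f : nat -> R) (S : set nat) (c : R) :
  (0 <= c)%R -> (forall k, 0 <= q k)%R -> (forall k, S k -> f k <= c * q k)%R ->
  \esum_(k in [set: nat]) (q k)%:E <= 1 ->
  \esum_(k in S) (f k)%:E <= c%:E.
Proof.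
move=> c0 q0 fq q1.
apply: (@le_trans _ _ (\esum_(k in S) (c%:E * (q k)%:E))).
  by apply: le_esum => k Sk; rewrite -EFinM lee_fin; exact: fq.
apply: (le_trans (@esumZl_le _ S c (fun k => (q k)%:E) c0 _)); first by move=> t; rewrite lee_fin.
rewrite -[leRHS]mule1; apply: lee_wpmul2l; first by rewrite lee_fin.
apply: le_trans q1; apply: esum_sub_le => t; by rewrite lee_fin.
Qed.

End Esum.


Section P1.
Variable R : realType.

Lemma limn_esup_ub (u : (\bar R)^nat) (b : \bar R) :
  (forall n, u n <= b)%E -> (limn_esup u <= b)%E.
Proof.
move=> ub; apply: (@le_trans _ _ (ereal_sup (u @` setT))).
  apply: ereal_inf_lbound; exists setT => //; exact: filterT.
by apply: ge_ereal_sup => _ [n _ <-].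
Qed.

Lemma limn_esup_lb0 (u : (\bar R)^nat) :
  (forall n, 0 <= u n)%E -> (0 <= limn_esup u)%E.
Proof.
move=> u0; apply: limf_esup_ge0 => //.

Qed.

Lemma inv_cvg0 (c : R) : (fun L : R => (c / L)%:E) @ +oo --> (0%R)%:E.
Proof.
apply: cvg_EFin; first by near=> x.
apply/cvgr0Pnorm_lt => e e0; near=> L.
have L0 : (0 < L)%R by near: L; apply: nbhs_pinfty_gt; rewrite num_real.
rewrite /= normrM normrV ?unitfE ?gt_eqF // (gtr0_norm L0) ltr_pdivrMr //.
rewrite -ltr_pdivrMl //.
by near: L; apply: nbhs_pinfty_gt; rewrite num_real.
Unshelve. all: by end_near. Qed.

Lemma part1 (p : nat -> nat -> R) (lam : nat -> R)
  (p_ge0 : forall n k, (0 <= p n k)%R)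
  (p_sum1 : forall n, (0 < n)%N -> (\esum_(k in [set: nat]) (p n k)%:E = 1)%E)
  (lam_pos : forall n, (0 < lam n)%R) :
  (fun L : R => limn_esup (fun n =>
        ((n%:R^-1)%:E *
         \esum_(k in [set k | (n%:R * p n k > L)%R]) (phi (lam n * p n k))%:E)%E))
       @ +oo --> (0%R)%:E.
Proof.
have key : forall L : R, (0 < L)%R -> forall n : nat,
  (0 <= (n%:R^-1)%:E * (\esum_(k in [set k | (n%:R * p n k > L)%R]) (phi (lam n * p n k))%:E)
    <= (4 / L)%:E)%E.
  move=> L L0 n; apply/andP; split.
    apply: mule_ge0; first by rewrite lee_fin invr_ge0.
    by apply: esum_ge0 => k _; rewrite lee_fin phi_ge0 // mulr_ge0 // ltW.
  case: n => [|n]; first by rewrite invr0 mul0e lee_fin divr_ge0 // ltW.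
  apply: (@le_trans _ _ ((n.+1%:R^-1)%:E * (4 * n.+1%:R / L)%:E)%E).
    apply: lee_wpmul2l; first by rewrite lee_fin invr_ge0.
    apply: (@esum_markov _ (p n.+1)).
    - by rewrite divr_ge0 // ?mulr_ge0 // ltW.
    - exact: p_ge0.
    - move=> k /= hk; apply: (@le_trans _ _ 4%R).
        by apply: phi_le4; rewrite mulr_ge0 // ltW.
      rewrite (_ : 4 * n.+1%:R / L * p n.+1 k = 4 * (n.+1%:R * p n.+1 k / L)); last by ring.
      rewrite ler_peMr // ler_pdivlMr // mul1r; exact: ltW.
    - by rewrite p_sum1.
  rewrite -EFinM lee_fin le_eqVlt; apply/orP; left; apply/eqP.
  field; rewrite (gt_eqF L0) /=; apply/negbT/gt_eqF; have := ler0n R n; lra.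
apply: (@squeeze_cvge _ _ _ _ (fun=> 0%E) _ (fun L => (4 / L)%:E)).
- near=> L; have L0 : (0 < L)%R by near: L; apply: nbhs_pinfty_gt; rewrite num_real.
  apply/andP; split.
    by apply: limn_esup_lb0 => n; case/andP: (key L L0 n).
  by apply: limn_esup_ub => n; case/andP: (key L L0 n).
- exact: cvg_cst.
- exact: inv_cvg0.
Unshelve. all: by end_near. Qed.

End P1.


Section Count.
Variable R : realType.

Lemma eqle (x y : R) : x = y -> x <= y.
Proof. by move=> ->. Qed.

Lemma esum_tuple_cons n (F : n.+1.-tuple nat -> \bar R) :
  (forall s, 0 <= F s)%E ->
  \esum_(s in [set: n.+1.-tuple nat]) F s =
  \esum_(x in [set: nat]) \esum_(t in [set: n.-tuple nat]) F (cons_tuple x t).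
Proof.
move=> F0; rewrite esum_esum; last by move=> *; exact: F0.
rewrite (reindex_esum ([set: nat] `*`` (fun=> [set: n.-tuple nat])) [set: n.+1.-tuple nat]
  (fun z => cons_tuple z.1 z.2)) //.
split.
- by move=> z.
- move=> [x t] [y u] _ _ /= /(congr1 val) /= [-> /val_inj ->] //.
- move=> s _; exists (thead s, behead_tuple s) => //=.
  by apply: val_inj => /=; rewrite [in RHS](tuple_eta s).
Qed.

Variables (q : nat -> R) (k : nat).
Hypothesis q0 : forall j, 0 <= q j.
Hypothesis q1 : (\esum_(j in [set: nat]) (q j)%:E = 1)%E.

Lemma qk_le1 : q k <= 1.
Proof.
rewrite -lee_fin -q1 -(@esum_set1 _ _ k (fun j => (q j)%:E)) ?lee_fin //.
by apply: esum_sub_le => t; rewrite lee_fin.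
Qed.

Lemma rest_eq : (\esum_(x in ~` [set k]) (q x)%:E = (1 - q k)%:E)%E.
Proof.
have h := esumID [set k] [set: nat] (fun x => (q x)%:E) (fun i _ => q0 i).
rewrite q1 !setTI esum_set1 ?lee_fin // in h.
set r := (\esum_(x in ~` [set k]) (q x)%:E)%E in h *.
have r0 : (0 <= r)%E by apply: esum_ge0 => x _; rewrite lee_fin.
have rle : (r <= 1)%E by rewrite -q1; apply: esum_sub_le => t; rewrite lee_fin.
have rfin : r \is a fin_num by rewrite ge0_fin_numE // (le_lt_trans rle) // ltry.
rewrite -(fineK rfin) in h *; congr (_%:E).
move: h; rewrite -EFinD => -[->]; ring.
Qed.

Lemma split_bound (H : nat -> \bar R) (b1 b2 : R) :
  (forall x, 0 <= H x)%E -> (H k <= b1%:E)%E -> (0 <= b2) ->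
  (forall x, x != k -> H x <= b2%:E)%E ->
  (\esum_(x in [set: nat]) ((q x)%:E * H x) <= (q k * b1 + (1 - q k) * b2)%:E)%E.
Proof.
move=> H0 Hk b20 Hx.
rewrite (esumID [set k]); last by move=> i _; rewrite mule_ge0 // lee_fin.
rewrite !setTI esum_set1 ?mule_ge0 ?lee_fin // EFinD.
apply: leeD.
  by rewrite EFinM; apply: lee_wpmul2l; rewrite ?lee_fin.
apply: (@le_trans _ _ (\esum_(x in ~` [set k]) (b2%:E * (q x)%:E))%E).
  apply: le_esum => x /= xk; rewrite muleC; apply: lee_wpmul2r; first by rewrite lee_fin.
  by apply: Hx; apply/eqP.
apply: (le_trans (@esumZl_le _ _ _ b2 (fun x => (q x)%:E) b20 _)).
  by move=> t; rewrite lee_fin.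
by rewrite rest_eq -EFinM mulrC.
Qed.

Definition W n c : \bar R := \esum_(t in [set: n.-tuple nat])
  ((\prod_(x <- t) q x) * (count_mem k t == c)%:R)%:E.

Lemma prod_ge0 (s : seq nat) : 0 <= \prod_(x <- s) q x.
Proof. by apply: prodr_ge0 => i _. Qed.

Lemma Wstep n c : (W n.+1 c <= \esum_(x in [set: nat]) ((q x)%:E *
   \esum_(t in [set: n.-tuple nat]) ((\prod_(y <- t) q y) * (((x == k) + count_mem k t)%N == c)%:R)%:E))%E.
Proof.
rewrite /W esum_tuple_cons; last by move=> s; rewrite lee_fin mulr_ge0 ?prod_ge0.
apply: le_esum => x _.
apply: (le_trans _ (@esumZl_le _ _ _ (q x) _ (q0 x) _)); last first.
  by move=> t; rewrite lee_fin mulr_ge0 ?prod_ge0.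
apply: le_esum => t _; rewrite -EFinM lee_fin /= big_cons mulrA.
by [].
Qed.


Lemma W_ge0 n c : (0 <= W n c)%E.
Proof. by apply: esum_ge0 => t _; rewrite lee_fin mulr_ge0 ?prod_ge0. Qed.

Lemma W_bound n : (W n 0%N <= ((1 - q k) ^+ n)%:E)%E /\
  (W n 1%N <= (n%:R * q k * (1 - q k) ^+ n.-1)%:E)%E.
Proof.
have r0 : 0 <= 1 - q k by rewrite subr_ge0 qk_le1.
elim: n => [|n [IH0 IH1]].
  rewrite /W (_ : [set: 0.-tuple nat] = [set [tuple]]); last first.
    by apply/seteqP; split => t //= _; rewrite (tuple0 t).
  rewrite esum_set1; last by rewrite lee_fin mulr_ge0 ?prod_ge0.
  rewrite /= big_nil esum_set1; last by rewrite lee_fin mulr_ge0 ?prod_ge0.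
  by rewrite /= big_nil !lee_fin /= !mul1r !mul0r.
have Hge0 c : forall x, (0 <= \esum_(t in [set: n.-tuple nat])
   ((\prod_(y <- t) q y) * (((x == k) + count_mem k t)%N == c)%:R)%:E)%E.
  by move=> x; apply: esum_ge0 => t _; rewrite lee_fin mulr_ge0 ?prod_ge0.
split.
  apply: (le_trans (Wstep n 0%N)).
  apply: (le_trans (@split_bound _ 0 ((1 - q k) ^+ n) (Hge0 0%N) _ _ _)).
  - by rewrite eqxx esum1 // => t _; rewrite /= mulr0.
  - exact: exprn_ge0.
  - by move=> x /negPf ->.
  - by rewrite exprS mulr0 add0r.
apply: (le_trans (Wstep n 1%N)).
apply: (le_trans (@split_bound _ ((1 - q k) ^+ n) (n%:R * q k * (1 - q k) ^+ n.-1) (Hge0 1%N) _ _ _)).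
- by rewrite eqxx.
- by rewrite mulr_ge0 ?exprn_ge0 // mulr_ge0.
- by move=> x /negPf ->.
- rewrite lee_fin /=; case: n {IH0 IH1 Hge0} => [|n]; first by apply: eqle; rewrite /= expr0; ring.
  rewrite /= exprS; apply: eqle; rewrite -!natr1; ring.
Qed.

End Count.


Lemma F1_le (s : seq nat) (M : nat) : (forall x, x \in s -> x < M)%N ->
  (F1 s <= \sum_(0 <= k < M) (count_mem k s == 1))%N.
Proof.
move=> sM; rewrite /F1.
have pe : perm_eq (undup s) [seq x <- iota 0 M | x \in s].
  apply: uniq_perm; first exact: undup_uniq.
    by rewrite filter_uniq // iota_uniq.
  move=> x; rewrite mem_undup mem_filter mem_iota /= add0n.
  by case xs: (x \in s) => //=; rewrite sM.
rewrite (permP pe) count_filter.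
apply: (@leq_trans (count (fun k => count_mem k s == 1) (iota 0 M))).
  by apply: sub_count => x /andP[].
rewrite -sum1_count big_mkcond /= /index_iota subn0 leq_eqVlt; apply/orP; left.
by apply/eqP; apply: eq_bigr => i _; case: ifP.
Qed.

Section EF1.
Variable R : realType.

Lemma esum_swap (T1 T2 : choiceType) (g : T1 -> T2 -> \bar R) :
  (forall i j, 0 <= g i j)%E ->
  \esum_(i in [set: T1]) \esum_(j in [set: T2]) g i j =
  \esum_(j in [set: T2]) \esum_(i in [set: T1]) g i j.
Proof.
move=> g0; rewrite !esum_esum //.
rewrite (reindex_esum ([set: T2] `*`` (fun=> [set: T1])) _ (fun x => (x.2, x.1))) //.
split => //=.
- by move=> [i1 i2] [j1 j2] /= _ _ [] -> ->.
- by move=> [i1 i2] _ /=; exists (i2, i1).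
Qed.

Lemma term_le (q : nat -> R) n (s : n.-tuple nat) : (forall j, 0 <= q j) ->
  (((\prod_(x <- s) q x) * (F1 s)%:R)%:E <=
   \esum_(k in [set: nat]) ((\prod_(x <- s) q x) * (count_mem k s == 1)%:R)%:E)%E.
Proof.
move=> q0; have P0 : 0 <= \prod_(x <- s) q x by apply: prodr_ge0.
rewrite -nneseries_esumT; last by move=> k; rewrite lee_fin mulr_ge0.
set M := (\max_(x <- s) x).+1.
apply: (le_trans _ (@nneseries_lim_ge _ _ xpredT 0%N M _)); last first.
  by move=> k _ _; rewrite lee_fin mulr_ge0.
rewrite sumEFin lee_fin -mulr_sumr ler_wpM2l //.
rewrite -natr_sum ler_nat; apply: F1_le => x xs.
by rewrite ltnS /M; apply: (@leq_bigmax_seq _ _ xpredT (fun x => x)).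
Qed.


Lemma real_ineq (q : R) n : 0 <= q -> q <= 1 -> (0 < n)%N ->
  n%:R * q * (1 - q) ^+ n.-1 <= expR 1 * phi (n%:R * q).
Proof.
move=> q0 q1; case: n => // m _ /=.
set x := m.+1%:R * q.
have x0 : 0 <= x by rewrite mulr_ge0.
have h1 : (1 - q) ^+ m <= expR (- q) ^+ m.
  apply: lerXn2r; rewrite ?nnegrE ?subr_ge0 ?expR_ge0 //.
  by have := expR_ge1Dx (- q); rewrite addrC.
have h2 : expR (- q) ^+ m = expR (- x) * expR q.
  rewrite /x -mulrN expRM_natl exprS mulrAC -expRD addNr expR0 mul1r //.
have h3 : expR q <= expR 1 by rewrite ler_expR.
apply: (@le_trans _ _ (x * (expR (- x) * expR q))).
  by rewrite -h2 ler_wpM2l.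
apply: (@le_trans _ _ (x * expR (- x) * expR 1)).
  by rewrite mulrA ler_wpM2l // mulr_ge0 // expR_ge0.
by rewrite mulrC ler_wpM2l ?expR_ge0 // phi_lower.
Qed.


Lemma EF1_le (p : nat -> nat -> R) n : (forall k, 0 <= p n k) -> (0 < n)%N ->
  (\esum_(k in [set: nat]) (p n k)%:E = 1)%E ->
  (EF1 p n <= (expR 1)%:E * sn2 p n)%E.
Proof.
move=> q0 n0 q1.
apply: (@le_trans _ _ (\esum_(s in [set: n.-tuple nat]) \esum_(k in [set: nat])
   ((\prod_(x <- s) p n x) * (count_mem k s == 1)%:R)%:E)%E).
  by apply: le_esum => s _; apply: term_le.
rewrite esum_swap; last by move=> s k; rewrite lee_fin mulr_ge0 // prodr_ge0.
apply: (@le_trans _ _ (\esum_(k in [set: nat]) ((expR 1)%:E * (phi (n%:R * p n k))%:E))%E).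
  apply: le_esum => k _.
  have [_ H] := @W_bound R (p n) k q0 q1 n.
  apply: (le_trans H); rewrite -EFinM lee_fin; apply: real_ineq => //; last first.
  exact: (@qk_le1 R (p n) k q0 q1).
apply: (le_trans (@esumZl_le _ _ _ (expR 1) (fun k => (phi (n%:R * p n k))%:E) (expR_ge0 _) _)).
  by move=> k; rewrite lee_fin phi_ge0 // mulr_ge0.
by [].
Qed.

End EF1.


Section P2.
Variable R : realType.

Lemma sn2_bounds (p : nat -> nat -> R) n : (forall k, 0 <= p n k) -> (0 < n)%N ->
  (\esum_(k in [set: nat]) (p n k)%:E = 1)%E ->
  (0 <= sn2 p n)%E /\ (sn2 p n <= n%:R%:E)%E.
Proof.
move=> q0 n0 q1; split.
  by apply: esum_ge0 => k _; rewrite lee_fin phi_ge0 // mulr_ge0.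
apply: (@esum_markov _ (p n)) => //.
by move=> k _; apply: phi_lex; rewrite mulr_ge0.
by rewrite q1.
Qed.

Lemma real_bound (lam s as_ eps kap : R) (n : nat) :
  0 < lam -> 0 < s -> 1 <= as_ -> 0 < eps -> 0 < kap ->
  lam <= 2 * n%:R -> kap * n%:R <= s ->
  s^-1 * (4 * lam / (eps * s / as_)) <= 8 / (eps * kap) * (as_ / s).
Proof.
move=> l0 s0 a1 e0 k0 ln ks.
have a0 : 0 < as_ by lra.
rewrite (_ : s^-1 * (4 * lam / (eps * s / as_)) = (4 * lam / (eps * s)) * (as_ / s)); last first.
  by field; rewrite !gt_eqF.
apply: ler_wpM2r; first by rewrite divr_ge0 // ltW.
rewrite -subr_ge0 (_ : 8 / (eps * kap) - 4 * lam / (eps * s) = (8 * s - 4 * lam * kap) / (eps * kap * s)); last first.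
  by field; rewrite !gt_eqF.
rewrite divr_ge0 //; last by rewrite !mulr_ge0 // ltW.
nra.
Qed.


Lemma part2 (p : nat -> nat -> R) (a : R -> R) (lam : nat -> R)
  (p_ge0 : forall n k, 0 <= p n k)
  (p_sum1 : forall n, (0 < n)%N -> (\esum_(k in [set: nat]) (p n k)%:E = 1)%E)
  (a_ge1 : forall t, 0 <= t -> 1 <= a t)
  (a_lin : (fun t => a t / t) @ +oo --> 0)
  (lam_pos : forall n, 0 < lam n) (kap : R) (k0 : 0 < kap)
  (lam_le : \forall n \near \oo, lam n <= 2 * n%:R)
  (s_lb : \forall n \near \oo, kap * n%:R <= fine (sn2 p n))
  (eps : R) (e0 : 0 < eps) :
      (fun n =>
         let s := fine (sn2 p n) in
         ((s^-1)%:E *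
          \esum_(k in [set k | (lam n * p n k > eps * s / a s)%R])
             ((lam n * p n k) ^+ 2 * expR (- (lam n * p n k)))%:E)%E)
      @ \oo --> (0%R)%:E.
Proof.
set s := fun n => fine (sn2 p n).
have s_oo : s @ \oo --> +oo.
  apply/cvgryPge => A; near=> n.
  apply: (@le_trans _ _ (kap * n%:R)); last by near: n.
  rewrite -ler_pdivrMl //; near: n; exact: nbhs_infty_ger.
have as_cvg : (fun n => a (s n) / s n) @ \oo --> 0.
  exact: (cvg_comp _ _ s_oo a_lin).
set C := 8 / (eps * kap).
apply: (@squeeze_cvge _ _ _ _ (fun=> 0%E) _ (fun n => (C * (a (s n) / s n))%:E)); last first.
- apply: cvg_EFin; first by near=> n.
  rewrite (_ : 0 = C * 0); last by rewrite mulr0.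
  exact: cvgMl_tmp.
- exact: cvg_cst.
near=> n.
have n0 : (0 < n)%N by near: n; exact: nbhs_infty_gt.
have ks : kap * n%:R <= s n by near: n.
have ln : lam n <= 2 * n%:R by near: n.
have s0 : 0 < s n by apply: lt_le_trans ks; rewrite mulr_gt0 // ltr0n.
have a1 : 1 <= a (s n) by apply: a_ge1; exact: ltW.
have T0 : 0 < eps * s n / a (s n) by rewrite divr_gt0 ?mulr_gt0 //; lra.
rewrite /=; apply/andP; split.
  apply: mule_ge0; first by rewrite lee_fin invr_ge0 ltW.
  by apply: esum_ge0 => k _; rewrite lee_fin sq_ge0.
apply: (@le_trans _ _ (((s n)^-1)%:E * (4 * lam n / (eps * s n / a (s n)))%:E)%E).
  apply: lee_wpmul2l; first by rewrite lee_fin invr_ge0 ltW.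
  apply: (@esum_markov _ (p n)).
  - by apply: divr_ge0; [rewrite mulr_ge0 // ltW | exact: ltW].
  - exact: p_ge0.
  - move=> k /= hk; apply: (@le_trans _ _ 4%R).
      by apply: sq_le4; rewrite mulr_ge0 // ltW.
    rewrite (_ : 4 * lam n / (eps * s n / a (s n)) * p n k = 4 * (lam n * p n k / (eps * s n / a (s n)))); last by ring.
    rewrite ler_peMr // ler_pdivlMr // mul1r; exact: ltW.
  - by rewrite p_sum1.
rewrite -EFinM lee_fin /C; have h := (@real_bound _ _ _ _ _ n (lam_pos n) s0 a1 e0 k0 ln ks). exact: h.
Unshelve. all: by end_near. Qed.

End P2.


Lemma alg_kap (R : realType) (c e s m : R) : 0 < e -> 0 < m -> c <= e * s / m -> c / e * m <= s.
Proof.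
move=> e0 m0; rewrite ler_pdivlMr // => h.
by rewrite mulrAC ler_pdivrMr // [s * e]mulrC.
Qed.

Theorem lemma3p1 (R : realType) (p : nat -> nat -> R) (a : R -> R) (c1 : R)
  (p_ge0 : forall n k, 0 <= p n k)
  (p_sum1 : forall n, (0 < n)%N -> (\esum_(k in [set: nat]) (p n k)%:E = 1)%E)
  (a_ge1 : forall t, 0 <= t -> 1 <= a t)
  (a_sqrt : (fun t => a t / Num.sqrt t) @ +oo --> +oo)
  (a_lin : (fun t => a t / t) @ +oo --> 0)
  (c1_lim : (fun n => (EF1 p n * (n%:R^-1)%:E)%E) @ \oo --> c1%:E)
  (c1_pos : 0 < c1) (c1_lt1 : c1 < 1) :
  forall lam : nat -> R, (forall n, 0 < lam n) ->
    (fun n => lam n / n%:R) @ \oo --> (1 : R^o) ->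
    ((fun L : R => limn_esup (fun n =>
        ((n%:R^-1)%:E *
         \esum_(k in [set k | (n%:R * p n k > L)%R]) (phi (lam n * p n k))%:E)%E))
       @ +oo --> (0%R)%:E)
    /\
    (forall eps : R, 0 < eps ->
      (fun n =>
         let s := fine (sn2 p n) in
         ((s^-1)%:E *
          \esum_(k in [set k | (lam n * p n k > eps * s / a s)%R])
             ((lam n * p n k) ^+ 2 * expR (- (lam n * p n k)))%:E)%E)
      @ \oo --> (0%R)%:E).
Proof.
move=> lam lam_pos Hl; split; first exact: part1.
move=> eps e0.
have lam_le : \forall n \near \oo, lam n <= 2 * n%:R.
  have := Hl; move/cvgrPdist_lt => /(_ 1 (@ltr01 R)) H1.
  near=> n. have h : `|1 - lam n / n%:R| < 1 by near: n; exact: H1.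
  have n0 : (0 < n)%N by near: n; exact: nbhs_infty_gt.
  have : lam n / n%:R < 2.
    have h3 := ler_norm (lam n / n%:R - 1); rewrite distrC in h; lra.
  rewrite ltr_pdivrMr ?ltr0n // => h4; exact: ltW.
pose kap := c1 / 2 / expR 1.
have k0 : 0 < kap by rewrite /kap !divr_gt0 // expR_gt0.
apply: (@part2 R p a lam p_ge0 p_sum1 a_ge1 a_lin lam_pos kap k0 lam_le) => //.
have /fine_cvgP [Ffin Fc] := c1_lim.
have : 0 < c1 / 2 by rewrite divr_gt0.
move: Fc => /cvgrPdist_lt H2 /H2 {}H2.
near=> n.
have n0 : (0 < n)%N by near: n; exact: nbhs_infty_gt.
set f := (EF1 p n * (n%:R^-1)%:E)%E.
have hf : f = (fine f)%:E by rewrite fineK // /f; near: n.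
have h : `|c1 - fine f| < c1 / 2 by rewrite /f; near: n.
have [sn0 snle] := @sn2_bounds R p n (p_ge0 n) n0 (p_sum1 n n0).
have snfin : sn2 p n = (fine (sn2 p n))%:E.
  by rewrite fineK // ge0_fin_numE // (le_lt_trans snle) // ltry.
have up : (f <= ((expR 1 * fine (sn2 p n)) * n%:R^-1)%:E)%E.
  rewrite /f; apply: (le_trans (lee_wpmul2r _ (@EF1_le R p n (p_ge0 n) n0 (p_sum1 n n0)))).
    by rewrite lee_fin invr_ge0.
  by rewrite snfin -!EFinM.
have lo : c1 / 2 < fine f by have := ler_norm (c1 - fine f); lra.
rewrite /kap; apply: alg_kap; rewrite ?expR_gt0 ?ltr0n //.
apply: ltW; apply: (lt_le_trans lo); by rewrite -lee_fin -hf.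
Unshelve. all: by end_near. Qed.
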